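(* Let $B$ be a left-free $H$-$G$-biset with a finite basis $S$, and let $g\in G$. Choose a basis $S$ and write $\Phi(g)=\langle h_s\rangle_{s\in S}\pi$ for the associated wreath map; let $S_1,\dots,S_\ell$ be the orbits of $\pi$ on $S$, and for each $j$, writing $S_j=\{s_1,\dots,s_{d_j}\}$ with $s_i^\pi=s_{i+1}$ (indices modulo $d_j$), let $k_j=h_{s_1}h_{s_2}\cdots h_{s_{d_j}}$. Then the multiset $\{(d_j,k_j^H)\mid j=1,\dots,\ell\}$ of pairs (degree, $H$-conjugacy class), called the lift of $g^G$, is independent of the choice of $g$ in its conjugacy class $g^G$, of the basis $S$, and of the cyclic ordering chosen for each orbit $S_j$.
   Context: An $H$-$G$-biset $B$ is left-free if as a left $H$-set it is isomorphic to $H\times S$; a basis is a subset $S$ containing exactly one element from each left $H$-orbit. The wreath map $\Phi\colon G\to H\wr\mathrm{Sym}(S)$ is defined by $\Phi(g)=\langle h_s\rangle_{s\in S}\pi$ where $sg=h_s\,s^\pi$ for all $s\in S$ (with $h_s\in H$, $s^\pi\in S$). $k^H$ denotes the conjugacy class of $k$ in $H$. *)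

(* Defs.v *)
From Stdlib Require Import Permutation.
From Stdlib Require List.
From mathcomp Require Import all_boot.
Set Implicit Arguments. Unset Strict Implicit. Unset Printing Implicit Defensive.

Record group_str (T : Type) := GroupStr {
  gmul : T -> T -> T;
  ginv : T -> T;
  gone : T;
  gmulA : forall x y z, gmul x (gmul y z) = gmul (gmul x y) z;
  gmul1 : forall x, gmul gone x = x;
  gmulV : forall x, gmul (ginv x) x = gone
}.

Record biset (H G B : Type) (gH : group_str H) (gG : group_str G) := Biset {
  actl : H -> B -> B;
  actr : B -> G -> B;
  actl1 : forall b, actl (gone gH) b = b;
  actlM : forall h1 h2 b, actl (gmul gH h1 h2) b = actl h1 (actl h2 b);
  actr1 : forall b, actr b (gone gG) = b;
  actrM : forall b g1 g2, actr b (gmul gG g1 g2) = actr (actr b g1) g2;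
  actlr : forall h b g, actr (actl h b) g = actl h (actr b g)
}.

(* e : 'I_n -> B is a (finite) basis of the left-free biset:
   every b is uniquely h . e i (so B = H x S as left H-sets, S = image of e
   meets every left H-orbit exactly once). *)
Definition is_basis H G B gH gG (X : @biset H G B gH gG) n (e : 'I_n -> B) :=
  forall b, exists h i, b = actl X h (e i) /\
    forall h' i', b = actl X h' (e i') -> h' = h /\ i' = i.

(* (h, pi) is the wreath map data of g w.r.t. basis e:  s_i g = h_i s_{pi i}. *)
Definition is_wreath H G B gH gG (X : @biset H G B gH gG) n (e : 'I_n -> B)
    (g : G) (h : 'I_n -> H) (pi : 'I_n -> 'I_n) :=
  forall i, actr X (e i) g = actl X (h i) (e (pi i)).

(* r lists exactly one starting point s_1 for each orbit of pi. *)
Definition orbit_reps n (pi : 'I_n -> 'I_n) (r : seq 'I_n) :=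
  forall i, count (fun x => fconnect pi x i) r = 1.

Definition cycle_prod H (gH : group_str H) n (h : 'I_n -> H) (pi : 'I_n -> 'I_n)
    (x : 'I_n) : H :=
  foldr (fun m acc => gmul gH (h (iter m pi x)) acc) (gone gH)
        (iota 0 (fingraph.order pi x)).

Definition lift_list H (gH : group_str H) n (h : 'I_n -> H) (pi : 'I_n -> 'I_n)
    (r : seq 'I_n) : seq (nat * H) :=
  [seq (fingraph.order pi x, cycle_prod gH h pi x) | x <- r].

Definition conjugate H (gH : group_str H) (k k' : H) :=
  exists y, k' = gmul gH (ginv gH y) (gmul gH k y).

(* equality of the multisets {(d_j, k_j^H)} *)
Definition same_lift H (gH : group_str H) (L L' : seq (nat * H)) :=
  exists L'', Permutation L' L'' /\
    List.Forall2 (fun p q => p.1 = q.1 /\ conjugate gH p.2 q.2) L L''.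

(* Main.v *)
Require Import Defs.
From Stdlib Require Import Permutation ClassicalEpsilon.
From mathcomp Require Import all_boot.
Set Implicit Arguments. Unset Strict Implicit. Unset Printing Implicit Defensive.

Lemma gmulVr H (gH : group_str H) x : gmul gH x (ginv gH x) = gone gH.
Proof.
set y := ginv gH x.
rewrite -[gmul gH x y](gmul1 gH) -(gmulV gH y) -gmulA (gmulA gH y x y).
by rewrite [gmul gH y x]gmulV gmul1.
Qed.

Lemma gmul1r H (gH : group_str H) x : gmul gH x (gone gH) = x.
Proof. by rewrite -(gmulV gH x) gmulA gmulVr gmul1. Qed.

Lemma ginvM H (gH : group_str H) a b :
  ginv gH (gmul gH a b) = gmul gH (ginv gH b) (ginv gH a).
Proof.
have E : gmul gH (gmul gH a b) (gmul gH (ginv gH b) (ginv gH a)) = gone gH.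
  by rewrite -gmulA (gmulA gH b) gmulVr gmul1 gmulVr.
by rewrite -[ginv gH _](gmul1r gH) -E gmulA gmulV gmul1.
Qed.

Lemma ginv1 H (gH : group_str H) : ginv gH (gone gH) = gone gH.
Proof. by rewrite -[ginv gH _](gmul1r gH) gmulV. Qed.

Lemma conj_refl H (gH : group_str H) k : conjugate gH k k.
Proof. by exists (gone gH); rewrite ginv1 gmul1 gmul1r. Qed.

Lemma conj_trans H (gH : group_str H) a b c :
  conjugate gH a b -> conjugate gH b c -> conjugate gH a c.
Proof.
move=> [y ->] [z ->]; exists (gmul gH y z).
by rewrite ginvM !gmulA.
Qed.

Section dummy. End dummy.

Lemma actlV H G B (gH : group_str H) (gG : group_str G) (X : biset B gH gG) a b :
  actl X (ginv gH a) (actl X a b) = b.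
Proof. by rewrite -actlM gmulV actl1. Qed.

Lemma actrV H G B (gH : group_str H) (gG : group_str G) (X : biset B gH gG) x b :
  actr X (actr X b x) (ginv gG x) = b.
Proof. by rewrite -actrM gmulVr actr1. Qed.

Lemma actVr H G B (gH : group_str H) (gG : group_str G) (X : biset B gH gG) x b :
  actr X (actr X b (ginv gG x)) x = b.
Proof. by rewrite -actrM gmulV actr1. Qed.

Lemma basis_free H G B (gH : group_str H) (gG : group_str G) (X : biset B gH gG)
  n (e : 'I_n -> B) a a' i j :
  is_basis X e -> actl X a (e i) = actl X a' (e j) -> a = a' /\ i = j.
Proof.
move=> Be E; have [h0 [i0 [E0 U]]] := Be (actl X a (e i)).
have [-> ->] := U a i erefl; have [-> ->] := U a' j E; by [].
Qed.

Lemma basis_same H G B (gH : group_str H) (gG : group_str G) (X : biset B gH gG)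
  n (e : 'I_n -> B) a b w i j :
  is_basis X e -> e i = actl X a w -> e j = actl X b w -> i = j.
Proof.
move=> Be Ei Ej.
have : actl X (gone gH) (e j) = actl X (gmul gH b (ginv gH a)) (e i).
  by rewrite actl1 Ei actlM actlV.
by case/(basis_free Be) => _ ->.
Qed.

Definition iterA H G B (gH : group_str H) (gG : group_str G) (X : biset B gH gG)
  (g : G) m b := iter m (fun b => actr X b g) b.

Lemma iterA_actl H G B (gH : group_str H) (gG : group_str G) (X : biset B gH gG)
  g m a b : iterA X g m (actl X a b) = actl X a (iterA X g m b).
Proof. by elim: m => //= m IH; rewrite /iterA /= -/(iterA X g m _) IH actlr. Qed.

Lemma iterA_conj H G B (gH : group_str H) (gG : group_str G) (X : biset B gH gG)
  g x m b : iterA X (gmul gG (ginv gG x) (gmul gG g x)) m (actr X b x)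
            = actr X (iterA X g m b) x.
Proof.
elim: m => //= m IH; rewrite /iterA /= -!/(iterA X _ m _) IH -!actrM.
by rewrite gmulA gmulVr gmul1.
Qed.

Definition Pm H (gH : group_str H) n (h : 'I_n -> H) (pi : 'I_n -> 'I_n) m x :=
  foldr (fun j acc => gmul gH (h (iter j pi x)) acc) (gone gH) (iota 0 m).

Lemma PmS H (gH : group_str H) n (h : 'I_n -> H) (pi : 'I_n -> 'I_n) m x :
  Pm gH h pi m.+1 x = gmul gH (h x) (Pm gH h pi m (pi x)).
Proof.
rewrite /Pm /=; congr gmul.
have: forall k, foldr (fun j acc => gmul gH (h (iter j pi x)) acc) (gone gH) (iota k.+1 m)
   = foldr (fun j acc => gmul gH (h (iter j pi (pi x))) acc) (gone gH) (iota k m).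
  elim: m => //= m IH k; by rewrite IH -iterS iterSr.
by move=> ->.
Qed.

Lemma key H G B (gH : group_str H) (gG : group_str G) (X : biset B gH gG)
  n (e : 'I_n -> B) g h pi :
  is_wreath X e g h pi -> forall m x,
  iterA X g m (e x) = actl X (Pm gH h pi m x) (e (iter m pi x)).
Proof.
move=> W; elim=> [|m IH] x; first by rewrite /iterA /= actl1.
rewrite /iterA iterSr -/(iterA X g m _) W iterA_actl IH PmS actlM -iterSr.
by [].
Qed.

Lemma pi_inj H G B (gH : group_str H) (gG : group_str G) (X : biset B gH gG)
  n (e : 'I_n -> B) g h pi :
  is_basis X e -> is_wreath X e g h pi -> injective pi.
Proof.
move=> Be W i j E.
apply: (basis_same (a := h i) (b := h j) (w := actr X (e (pi i)) (ginv gG g)) Be).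
  by rewrite -actlr -W actrV.
by rewrite E -actlr -W actrV.
Qed.

Lemma order_le (T : finType) (f : T -> T) x m :
  0 < m -> iter m f x = x -> fingraph.order f x <= m.
Proof.
move=> m0 E; rewrite leqNgt; apply/negP=> lt.
have := findex_iter lt; rewrite E findex0 => E0.
by move: m0; rewrite -E0.
Qed.

Lemma iter_comm (T T' : finType) (f : T -> T) (f' : T' -> T') (phi : T -> T') :
  (forall x, phi (f x) = f' (phi x)) -> forall m x, iter m f' (phi x) = phi (iter m f x).
Proof. by move=> C; elim=> //= m IH x; rewrite IH C. Qed.

Lemma order_comm (T T' : finType) (f : T -> T) (f' : T' -> T') (phi : T -> T') :
  injective f -> injective f' -> injective phi ->
  (forall x, phi (f x) = f' (phi x)) ->
  forall x, fingraph.order f' (phi x) = fingraph.order f x.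
Proof.
move=> fi fi' phii C x; apply/eqP; rewrite eqn_leq; apply/andP; split.
  by apply: order_le => //; rewrite (iter_comm C) iter_order.
apply: order_le => //; apply: phii; by rewrite -(iter_comm C) iter_order.
Qed.

Lemma order_iter (T : finType) (f : T -> T) : injective f ->
  forall m x, fingraph.order f (iter m f x) = fingraph.order f x.
Proof.
move=> fi; elim=> //= m IH x.
by rewrite (order_comm fi fi fi (fun _ => erefl)) IH.
Qed.

Lemma connect_comm (T T' : finType) (f : T -> T) (f' : T' -> T') (phi : T -> T') :
  (forall x, phi (f x) = f' (phi x)) ->
  forall a b, fconnect f a b -> fconnect f' (phi a) (phi b).
Proof.
move=> C a b /iter_findex <-; by rewrite -(iter_comm C) fconnect_iter.
Qed.

Lemma connect_refl (T T' : finType) (f : T -> T) (f' : T' -> T') (phi : T -> T') :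
  injective phi -> (forall x, phi (f x) = f' (phi x)) ->
  forall a b, fconnect f' (phi a) (phi b) -> fconnect f a b.
Proof.
move=> phii C a b /iter_findex; rewrite (iter_comm C) => /phii <-.
exact: fconnect_iter.
Qed.

Lemma reps_uniq (T : finType) (f : T -> T) (r : seq T) :
  (forall i, count (fun x => fconnect f x i) r = 1) -> uniq r.
Proof.
move=> R; apply: count_mem_uniq => x.
case: (boolP (x \in r)) => [xr|/count_memPn //].
have L1 : count_mem x r <= 1.
  rewrite -(R x); apply: sub_count => y /= /eqP ->; exact: connect0.
have L2 : 0 < count_mem x r by rewrite -has_count has_pred1.
by move: L1 L2; case: (count_mem x r) => [|[|]].
Qed.

Lemma reps_unique (T : finType) (f : T -> T) (r : seq T) :
  (forall i, count (fun x => fconnect f x i) r = 1) ->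
  forall a b, a \in r -> b \in r -> fconnect f a b -> a = b.
Proof.
move=> R a b ar br ab; apply/eqP/negPn/negP=> nab.
have U := reps_uniq R.
have := R b; rewrite ((permP (perm_to_rem ar)) (fun x => fconnect f x b)) /= ab /=.
have : b \in rem a r by rewrite (mem_rem_uniq _ U) inE eq_sym nab.
move=> brem; have : 0 < count (fun x => fconnect f x b) (rem a r).
  by rewrite -has_count; apply/hasP; exists b => //; exact: connect0.
by case: (count _ _).
Qed.

Lemma reps_exists (T : finType) (f : T -> T) (r : seq T) :
  (forall i, count (fun x => fconnect f x i) r = 1) ->
  forall i, exists2 a, a \in r & fconnect f a i.
Proof.
move=> R i; apply/hasP; by rewrite has_count R.
Qed.

Lemma rem_Perm (T : eqType) (a : T) s : a \in s -> Permutation s (a :: rem a s).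
Proof.
elim: s => //= b s IH; rewrite inE.
case: (eqVneq b a) => [->|ne]; first by move=> _; exact: Permutation_refl.
move=> /= as_.
apply: (Permutation_trans (perm_skip b (IH as_))); exact: perm_swap.
Qed.

Lemma permeq_Perm (T : eqType) (s1 s2 : seq T) : perm_eq s1 s2 -> Permutation s1 s2.
Proof.
elim: s1 s2 => [|a s IH] s2 P.
  by move: (perm_size P); case: s2 P => //.
have as2 : a \in s2 by rewrite -(perm_mem P) mem_head.
apply: (Permutation_trans _ (Permutation_sym (rem_Perm as2))).
apply: perm_skip; apply: IH.
by rewrite -(perm_cons a); apply: perm_trans P (perm_to_rem as2).
Qed.

Lemma iterA_r H G B (gH : group_str H) (gG : group_str G) (X : biset B gH gG) g m b :
  iterA X g m (actr X b g) = actr X (iterA X g m b) g.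
Proof. by rewrite /iterA -iterSr iterS. Qed.

Lemma cp_step H G B (gH : group_str H) (gG : group_str G) (X : biset B gH gG)
  n (e : 'I_n -> B) g h pi :
  is_basis X e -> is_wreath X e g h pi -> forall z,
  conjugate gH (cycle_prod gH h pi z) (cycle_prod gH h pi (pi z)).
Proof.
move=> Be W z; have pinj := pi_inj Be W.
have Od : fingraph.order pi (pi z) = fingraph.order pi z :=
  order_comm pinj pinj pinj (fun _ => erefl) z.
have K1 := key W (fingraph.order pi z) z; rewrite iter_order // in K1.
have K2 := key W (fingraph.order pi z) (pi z).
have It : iter (fingraph.order pi z) pi (pi z) = pi z by rewrite -Od iter_order.
rewrite It in K2.
have Ez : e (pi z) = actl X (ginv gH (h z)) (actr X (e z) g) by rewrite W actlV.
have : iterA X g (fingraph.order pi z) (e (pi z)) = iterA X g (fingraph.order pi z) (e (pi z)) by [].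
rewrite {1}K2 {2}Ez iterA_actl iterA_r K1 actlr W -!actlM.
case/(basis_free Be) => E _; exists (h z).
change (Pm gH h pi (fingraph.order pi (pi z)) (pi z) = gmul gH (ginv gH (h z))
  (gmul gH (Pm gH h pi (fingraph.order pi z) z) (h z))).
by rewrite Od E -gmulA.
Qed.

Lemma cp_iter H G B (gH : group_str H) (gG : group_str G) (X : biset B gH gG)
  n (e : 'I_n -> B) g h pi :
  is_basis X e -> is_wreath X e g h pi -> forall m z,
  conjugate gH (cycle_prod gH h pi z) (cycle_prod gH h pi (iter m pi z)).
Proof.
move=> Be W; elim=> [|m IH] z; first exact: conj_refl.
rewrite iterS; apply: conj_trans (IH z) _; exact: cp_step Be W _.
Qed.

Theorem mainTheorem11 (H G B : Type) (gH : group_str H) (gG : group_str G)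
  (X : biset B gH gG)
  (n : nat) (e : 'I_n -> B) (n' : nat) (e' : 'I_n' -> B)
  (g g' x : G)
  (h : 'I_n -> H) (pi : 'I_n -> 'I_n) (r : seq 'I_n)
  (h' : 'I_n' -> H) (pi' : 'I_n' -> 'I_n') (r' : seq 'I_n') :
  is_basis X e -> is_basis X e' ->
  g' = gmul gG (ginv gG x) (gmul gG g x) ->
  is_wreath X e g h pi -> is_wreath X e' g' h' pi' ->
  orbit_reps pi r -> orbit_reps pi' r' ->
  same_lift gH (lift_list gH h pi r) (lift_list gH h' pi' r').
Proof.
move=> Be Be' Eg W W' R R'.
have pinj := pi_inj Be W; have pinj' := pi_inj Be' W'.
have F : forall i, {p : H * 'I_n' | actr X (e i) x = actl X p.1 (e' p.2)}.
  move=> i; apply: constructive_indefinite_description.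
  have [a [k [E _]]] := Be' (actr X (e i) x); by exists (a, k).
pose psi i := (sval (F i)).1; pose phi i := (sval (F i)).2.
have Fp : forall i, actr X (e i) x = actl X (psi i) (e' (phi i)) := fun i => svalP (F i).
have Cphi : forall i, phi (pi i) = pi' (phi i).
  move=> i; have E : actr X (actr X (e i) x) g' = actr X (actr X (e i) g) x.
    by rewrite Eg -!actrM gmulA gmulVr gmul1.
  move: E; rewrite {1}Fp actlr W' W actlr Fp -!actlM.
  by case/(basis_free Be') => _ ->.
have phiinj : injective phi.
  move=> i j E.
  apply: (basis_same (a:=psi i) (b:=psi j) (w:= actr X (e' (phi i)) (ginv gG x)) Be).
    by rewrite -actlr -Fp actrV.
  by rewrite E -actlr -Fp actrV.
have phisurj : forall y, exists i, phi i = y.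
  move=> y; have [a [i [E _]]] := Be (actr X (e' y) (ginv gG x)).
  exists i; have : actl X (psi i) (e' (phi i)) = actl X (ginv gH a) (e' y).
    by rewrite -Fp -{1}(actlV X a (e i)) -E actlr actVr.
  by case/(basis_free Be').
have Ord : forall i, fingraph.order pi' (phi i) = fingraph.order pi i :=
  order_comm pinj pinj' phiinj Cphi.
have Cp : forall i, conjugate gH (cycle_prod gH h pi i) (cycle_prod gH h' pi' (phi i)).
  move=> i; exists (psi i).
  have K := key W (fingraph.order pi i) i; rewrite iter_order // in K.
  have K' := key W' (fingraph.order pi i) (phi i).
  have It : iter (fingraph.order pi i) pi' (phi i) = phi i by rewrite -Ord iter_order.
  rewrite It in K'.
  have E := iterA_conj X g x (fingraph.order pi i) (e i).
  rewrite -Eg K Fp iterA_actl K' actlr Fp -!actlM in E.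
  case/(basis_free Be'): E => E _.
  change (Pm gH h' pi' (fingraph.order pi' (phi i)) (phi i) = gmul gH (ginv gH (psi i))
    (gmul gH (Pm gH h pi (fingraph.order pi i) i) (psi i))).
  by rewrite Ord -E gmulA gmulV gmul1.
pose rho a := nth (phi a) r' (find (fun y => fconnect pi' y (phi a)) r').
have rhoP : forall a, rho a \in r' /\ fconnect pi' (rho a) (phi a).
  move=> a; have hs : has (fun y => fconnect pi' y (phi a)) r' by rewrite has_count R'.
  split; [rewrite /rho; apply: mem_nth; by rewrite -has_find | exact: (nth_find (phi a) hs)].
have rho_ok : forall a, fingraph.order pi a = fingraph.order pi' (rho a) /\
    conjugate gH (cycle_prod gH h pi a) (cycle_prod gH h' pi' (rho a)).
  move=> a; have [_ c] := rhoP a; rewrite fconnect_sym // in c.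
  rewrite -(iter_findex c); split; first by rewrite order_iter // Ord.
  apply: conj_trans (Cp a) _; exact: cp_iter Be' W' _ _.
have rho_inj : {in r &, injective rho}.
  move=> a b ar br E; apply: (reps_unique R ar br); apply: (connect_refl phiinj Cphi).
  have [_ ca] := rhoP a; have [_ cb] := rhoP b.
  rewrite fconnect_sym // in ca; apply: connect_trans ca _; by rewrite E.
have Pr : perm_eq r' (map rho r).
  apply: uniq_perm; [exact: reps_uniq R' | by rewrite map_inj_in_uniq // (reps_uniq R) |].
  move=> y; apply/idP/idP.
    move=> yr; have [x0 Ex] := phisurj y.
    have [a ar ca] := reps_exists R x0.
    apply/mapP; exists a => //.
    have [ra cr] := rhoP a.
    apply: (reps_unique R') => //.
    have c1 := connect_comm Cphi ca; rewrite Ex in c1.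
    rewrite fconnect_sym // in c1; rewrite fconnect_sym // in cr; apply: connect_trans c1 cr.
  by case/mapP => a _ ->; have [] := rhoP a.
exists (map (fun y => (fingraph.order pi' y, cycle_prod gH h' pi' y)) (map rho r)); split.
  rewrite /lift_list; apply: Permutation_map; exact: permeq_Perm.
rewrite /lift_list; elim: (r) => [|a s IH] /=; constructor => //.
by have [? ?] := rho_ok a.
Qed.
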